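(* Let $n=36$ and let $\mathcal{D}_{S_1},\mathcal{D}_{S_2}\subseteq\mathcal{D}_{[36]}\setminus\{36\}$ with $12\in\mathcal{D}_{S_1}\cap\mathcal{D}_{S_2}$. If $\mathrm{Spec}(\mathrm{ICG}(36,\mathcal{D}_{S_1}))=\mathrm{Spec}(\mathrm{ICG}(36,\mathcal{D}_{S_2}))$, then $\mathcal{D}_{S_1}=\mathcal{D}_{S_2}$.
   Context: Identify $\mathbb{Z}_n$ with $[n]=\{1,\dots,n\}$. For a divisor $d$ of $n$, $G_n(d)=\{j\in[n]:\gcd(j,n)=d\}$; $\mathcal{D}_{[n]}$ is the set of positive divisors of $n$. For $\mathcal{D}\subseteq\mathcal{D}_{[n]}\setminus\{n\}$, $\mathrm{ICG}(n,\mathcal{D})=\mathrm{Cay}(\mathbb{Z}_n,S)$ with $S=\bigcup_{d\in\mathcal{D}}G_n(d)$, and $\mathcal{D}=\mathcal{D}_S$. $\mathrm{Spec}$ is the multiset of adjacency eigenvalues. *)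

(* Defs.v *)
From mathcomp Require Import all_boot all_order all_algebra all_field.
Set Implicit Arguments. Unset Strict Implicit. Unset Printing Implicit Defensive.
Import GRing.Theory Num.Theory.
Local Open Scope ring_scope.

(* Z_n is identified with the ordinals 'I_n (the residue 0 plays the role of n in [n];
   note gcdn 0 n = n = gcdn n n, so G_n(d) is unaffected).
   S = union of G_n(d), d in D, i.e. S = {j | gcd(j,n) \in D}. *)
Definition ICG_adj (n : nat) (D : pred nat) : 'M[algC]_n :=
  \matrix_(i < n, j < n) ((gcdn ((j + n - i) %% n) n \in D) : nat)%:R.

(* Spec A = multiset of eigenvalues of A (over algC, with algebraic multiplicity):
   the multiplicity of z is its multiplicity as a root of the characteristic polynomial. *)
Definition spec_mult (n : nat) (A : 'M[algC]_n) (z : algC) : nat :=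
  mup z (char_poly A).

Definition same_spec (n : nat) (A B : 'M[algC]_n) : Prop :=
  forall z : algC, spec_mult A z = spec_mult B z.

(* Main.v *)
Require Import Defs.
From mathcomp Require Import all_boot all_order all_algebra all_field.
From mathcomp Require Import zify.
Set Implicit Arguments. Unset Strict Implicit. Unset Printing Implicit Defensive.
Import GRing.Theory Num.Theory.
Local Open Scope ring_scope.

Section Circ.
Variable z : algC.
Hypothesis zP : 36.-primitive_root z.
Variable c : nat -> bool.

Definition Cm : 'M[algC]_36 :=
  \matrix_(i < 36, j < 36) ((c ((j + 36 - i) %% 36)) : nat)%:R.
Definition lam (k : nat) : algC := \sum_(m < 36) ((c m : nat)%:R * z ^+ (k * m)).
Definition Fm : 'M[algC]_36 := \matrix_(k < 36, i < 36) z ^+ (k * (36 - i)).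
Definition Gm : 'M[algC]_36 := \matrix_(i < 36, l < 36) z ^+ (i * l).

Lemma zexp a b : (a %% 36 = b %% 36)%N -> z ^+ a = z ^+ b.
Proof. by move=> E; rewrite -(prim_expr_mod zP) E prim_expr_mod. Qed.

Definition phi (j : 'I_36) (m : 'I_36) : 'I_36 :=
  Ordinal (ltn_pmod (j + 36 - m) (isT : (0 < 36)%N)).

Lemma phiK j : involutive (phi j).
Proof. move=> m; apply: val_inj => /=; have := ltn_ord m; have := ltn_ord j; lia. Qed.

Lemma FA : Fm *m Cm = diag_mx (\row_k lam k) *m Fm.
Proof.
apply/matrixP => k j; rewrite mul_diag_mx !mxE /lam mulr_suml.
rewrite (reindex_inj (can_inj (phiK j))) /=.
apply: eq_bigr => m _; rewrite !mxE.
have -> : ((j + 36 - (phi j m)) %% 36 = m)%N.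
  rewrite /=; have := ltn_ord m; have := ltn_ord j; lia.
rewrite mulrC -mulrA -exprD; congr (_ * _); apply: zexp.
rewrite -mulnDr -(modnMmr k (36 - _)) -(modnMmr k (m + _)); congr ((_ * _) %% _)%N.
rewrite /=; have := ltn_ord m; have := ltn_ord j; lia.
Qed.

Lemma geo (e : nat) : (\sum_(i < 36) z ^+ (i * e) = if (36 %| e)%N then 36%:R else 0).
Proof.
under eq_bigr => i _ do rewrite mulnC exprM.
case: ifP => [d|nd].
  have -> : z ^+ e = 1 by apply/eqP; rewrite -(prim_order_dvd zP).
  by under eq_bigr => i _ do rewrite expr1n; rewrite sumr_const card_ord.
have u1 : z ^+ e - 1 != 0 by rewrite subr_eq0 -(prim_order_dvd zP) nd.
apply: (mulfI u1); rewrite -subrX1 mulr0 -exprM mulnC exprM.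
by rewrite (prim_expr_order zP) expr1n subrr.
Qed.

Lemma FG : Fm *m Gm = (36%:R)%:M.
Proof.
apply/matrixP => k l; rewrite !mxE.
rewrite (eq_bigr (fun i : 'I_36 => z ^+ (i * (l + 36 - k)))); last first.
  move=> i _; rewrite !mxE -exprD; apply: zexp.
  have := ltn_ord i; have := ltn_ord k; have := ltn_ord l.
  move: (nat_of_ord i) (nat_of_ord k) (nat_of_ord l) => a b d ha hb hd.
  rewrite mulnBr; nia.
rewrite geo; have := ltn_ord k; have := ltn_ord l.
case: (eqVneq k l) => [->|nkl] hl hk.
  by rewrite addKn dvdnn mulr1n.
have -> : (36 %| l + 36 - k)%N = false.
  apply/negbTE/negP => /dvdnP [q Hq].
  have : (k : nat) <> l by move=> E; move/eqP: nkl; apply; apply: val_inj.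
  lia.
by rewrite mulr0n.
Qed.

Lemma detF : \det Fm != 0.
Proof.
have := congr1 determinant FG; rewrite det_mulmx det_scalar => E.
apply/eqP => F0; move: E; rewrite F0 mul0r => /esym/eqP.
by rewrite expf_eq0 /= pnatr_eq0.
Qed.

Lemma char_Cm : char_poly Cm = \prod_(k < 36) ('X - (lam k)%:P).
Proof.
pose L : 'M[algC]_36 := diag_mx (\row_k lam k).
have H : map_mx polyC Fm *m char_poly_mx Cm = char_poly_mx L *m map_mx polyC Fm.
  rewrite /char_poly_mx mulmxBr mulmxBl mul_mx_scalar mul_scalar_mx.
  by rewrite -!map_mxM FA.
have := congr1 determinant H; rewrite !det_mulmx det_map_mx mulrC => E.
have nz : (\det Fm)%:P != 0 :> {poly algC} by rewrite polyC_eq0 detF.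
rewrite /char_poly (mulIf nz E) -/(char_poly L) char_poly_trig ?diag_mx_is_trig //.
by apply: eq_bigr => i _; rewrite !mxE eqxx mulr1n.
Qed.

Fixpoint cnt (p t : nat) : nat :=
  if p is p'.+1 then (\sum_(m < 36) c m * cnt p' ((t + 36 - m) %% 36))%N
  else (t == 0)%N.

Lemma psum p t : (t < 36)%N ->
  \sum_(k < 36) lam k ^+ p * z ^+ (k * (36 - t)) = (36 * cnt p t)%:R.
Proof.
elim: p t => [|p IH] t ht /=.
  under eq_bigr => k _ do rewrite expr0 mul1r.
  rewrite geo; case: (eqVneq t 0) => [->|t0] /=; first by [].
  have -> : (36 %| 36 - t)%N = false.
    apply/negbTE/negP => /dvdnP [q Hq]; lia.
  by rewrite muln0.
under eq_bigr => k _ do rewrite exprS /lam mulr_suml mulr_suml.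
rewrite exchange_big /= mulnC big_distrl /= natr_sum.
apply: eq_bigr => m _.
have hm := ltn_ord m.
set t' := ((t + 36 - m) %% 36)%N.
have ht' : (t' < 36)%N by rewrite ltn_mod.
rewrite -mulnA natrM [(cnt p t' * 36)%N]mulnC -(IH t' ht') mulr_sumr.
apply: eq_bigr => k _.
rewrite -/(lam k) -!mulrA; congr (_ * _); rewrite mulrCA; congr (_ * _).
rewrite -exprD; apply: zexp.
rewrite -mulnDr -(modnMmr k (m + _)) -(modnMmr k (36 - _)); congr ((_ * _) %% _)%N.
rewrite /t'; lia.
Qed.

Lemma psum0 p : \sum_(k < 36) lam k ^+ p = (36 * cnt p 0)%:R.
Proof.
rewrite -psum //; apply: eq_bigr => k _.
by rewrite subn0 mulnC exprM (prim_expr_order zP) expr1n mulr1.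
Qed.
End Circ.
Local Close Scope ring_scope.

Definition cstep (c : nat -> bool) (v : seq nat) : seq nat :=
  [seq (sumn [seq c m * nth 0 v ((t + 36 - m) %% 36) | m <- iota 0 36]) %% 61
    | t <- iota 0 36].
Definition cv c p := iter p (cstep c) [seq (t == 0 : nat) | t <- iota 0 36].

Lemma size_cv c p : size (cv c p) = 36.
Proof. by case: p => [|p]; rewrite /cv ?iterS size_map size_iota. Qed.

Lemma cv_ok c p t : t < 36 -> nth 0 (cv c p) t = cnt c p t %% 61.
Proof.
elim: p t => [|p IH] t ht.
  have -> : cv c 0 = [seq (t == 0 : nat) | t <- iota 0 36] by [].
  rewrite (nth_map 0) ?size_iota // nth_iota //=; by case: eqP.
have -> : cv c p.+1 = cstep c (cv c p) by [].
rewrite /cstep (nth_map 0) ?size_iota // nth_iota // add0n.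
rewrite sumnE big_map.
change (iota 0 36) with (index_iota 0 36); rewrite big_mkord.
rewrite -modn_summ -[RHS]modn_summ; congr (_ %% _).
apply: eq_bigr => m _; rewrite IH ?ltn_mod // modnMmr //.
Qed.

Lemma cnt_ext c1 c2 p t : c1 =1 c2 -> cnt c1 p t = cnt c2 p t.
Proof.
move=> E; elim: p t => [|p IH] t //=; apply: eq_bigr => m _; by rewrite E IH.
Qed.

Definition key c := [:: nth 0 (cv c 2) 0; nth 0 (cv c 3) 0; nth 0 (cv c 4) 0].

Definition cb (b : seq bool) (m : nat) : bool :=
  let g := gcdn m 36 in
  [|| g == 12, (g == 1) && nth false b 0, (g == 2) && nth false b 1,
      (g == 3) && nth false b 2, (g == 4) && nth false b 3,
      (g == 6) && nth false b 4, (g == 9) && nth false b 5 |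
      (g == 18) && nth false b 6].

Fixpoint allbits (n : nat) : seq (seq bool) :=
  if n is n'.+1 then [seq x :: s | x <- [:: false; true], s <- allbits n'] else [:: [::]].

Lemma allbits_uniq : uniq [seq key (cb b) | b <- allbits 7].
Proof. by vm_compute. Qed.

Lemma spec_cnt (z : algC) (zP : (36.-primitive_root z)%R) c1 c2 :
  same_spec (Cm c1) (Cm c2) -> forall p, cnt c1 p 0 = cnt c2 p 0.
Proof.
move=> S p.
have E : perm_eq [seq lam z c1 k | k : 'I_36 <- index_enum 'I_36]
                 [seq lam z c2 k | k : 'I_36 <- index_enum 'I_36].
  apply/allP => x _; apply/eqP; have := S x.
  rewrite /spec_mult !(char_Cm zP).
  rewrite -(big_map (fun k : 'I_36 => lam z c1 k) xpredT (fun y => 'X - y%:P)%R).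
  rewrite -(big_map (fun k : 'I_36 => lam z c2 k) xpredT (fun y => 'X - y%:P)%R).
  by rewrite !mu_prod_XsubC.
have := perm_big (op := +%R) (x := 0%R) _ E (P := xpredT) (F := fun x => x ^+ p)%R.
rewrite !big_map !(psum0 zP) => /eqP; rewrite eqr_nat eqn_pmul2l //.
by move/eqP.
Qed.

Lemma uniq_map_in_inj (T1 T2 : eqType) (f : T1 -> T2) s :
  uniq (map f s) -> {in s &, injective f}.
Proof.
elim: s => //= a s IH /andP[Hn Hu] x y; rewrite !inE.
move=> /orP[/eqP->|xs] /orP[/eqP->|ys] // E.
- by move: Hn; rewrite E map_f.
- by move: Hn; rewrite -E map_f.
- exact: IH.
Qed.

Lemma mem_allbits n b : size b = n -> b \in allbits n.
Proof.
elim: n b => [|n IH] [|x s] //= [hs].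
by rewrite !mem_cat; case: x; rewrite ?orbT /= ?orbF map_f ?orbT //; apply: IH.
Qed.

Definition bits (D : pred nat) : seq bool :=
  [:: 1 \in D; 2 \in D; 3 \in D; 4 \in D; 6 \in D; 9 \in D; 18 \in D].

Lemma c_cb (D : pred nat) :
  (forall d, d \in D -> (d %| 36) && (d != 36)) -> 12 \in D ->
  (fun m => gcdn m 36 \in D) =1 cb (bits D).
Proof.
move=> hD h12 m; rewrite /cb.
have : gcdn m 36 \in divisors 36 by rewrite -dvdn_divisors // dvdn_gcdr.
move: (gcdn m 36) => g.
have h36 : (36 \in D) = false.
  by apply/negbTE/negP => /hD /andP[_ /eqP].
have : all (fun g => (g \in D) == [|| g == 12, (g == 1) && nth false (bits D) 0, (g == 2) && nth false (bits D) 1,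
      (g == 3) && nth false (bits D) 2, (g == 4) && nth false (bits D) 3,
      (g == 6) && nth false (bits D) 4, (g == 9) && nth false (bits D) 5 |
      (g == 18) && nth false (bits D) 6]) (divisors 36).
  rewrite [divisors 36]/= /= h12 h36 /=.
  by case: (1 \in D); case: (2 \in D); case: (3 \in D); case: (4 \in D);
     case: (6 \in D); case: (9 \in D); case: (18 \in D).
by move/allP => H /H /eqP.
Qed.

Lemma key_cnt c : key c = [:: cnt c 2 0 %% 61; cnt c 3 0 %% 61; cnt c 4 0 %% 61].
Proof. by rewrite /key !cv_ok. Qed.

Theorem lemma3p23 (D1 D2 : pred nat) :
  (forall d, d \in D1 -> (d %| 36)%N && (d != 36%N)) ->
  (forall d, d \in D2 -> (d %| 36)%N && (d != 36%N)) ->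
  12%N \in D1 -> 12%N \in D2 ->
  same_spec (ICG_adj 36 D1) (ICG_adj 36 D2) ->
  D1 =i D2.
Proof.
move=> h1 h2 i1 i2 S.
have [z zP] := C_prim_root_exists (isT : (0 < 36)%N).
have S' : same_spec (Cm (fun m => gcdn m 36 \in D1)) (Cm (fun m => gcdn m 36 \in D2)) by [].
have K : key (cb (bits D1)) = key (cb (bits D2)).
  rewrite !key_cnt -!(cnt_ext _ _ (c_cb h1 i1)) -!(cnt_ext _ _ (c_cb h2 i2)).
  by rewrite !(spec_cnt zP S').
have B : bits D1 = bits D2.
  by apply: (uniq_map_in_inj allbits_uniq) => //; apply: mem_allbits.
case: B => e1 e2 e3 e4 e6 e9 e18.
have A0 : all (fun d => (d \in D1) == (d \in D2)) [:: 1; 2; 3; 4; 6; 9; 12; 18].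
  by rewrite /= e1 e2 e3 e4 e6 e9 e18 i1 i2 !eqxx.
have A : forall d, d \in [:: 1; 2; 3; 4; 6; 9; 12; 18] -> (d \in D1) = (d \in D2).
  by move=> d /(allP A0) /eqP.
have L : forall d, (d %| 36) && (d != 36) -> d \in [:: 1; 2; 3; 4; 6; 9; 12; 18].
  move=> d /andP[hd hn]; move: hd; rewrite dvdn_divisors // => hd.
  have Dv : divisors 36 = rcons [:: 1; 2; 3; 4; 6; 9; 12; 18] 36 by vm_compute.
  by move: hd; rewrite Dv mem_rcons inE (negbTE hn).
move=> d; case E1: (d \in D1); case E2: (d \in D2) => //.
- by have := A d (L d (h1 d E1)); rewrite E1 E2.
- by have := A d (L d (h2 d E2)); rewrite E1 E2.
Qed.
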